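(* Let $\eta\ge2$ and $P\in\mathfrak N_\eta$ with $h_P>\eta$. Then $P$ does not have a 4-crown as a retract.
   Context: All posets are finite; $h_P$ is the height; level sets $P(0)=\min P$, $P(k+1)=\min(P\setminus\bigcup_{i\le k}P(i))$; $A<B$ means $a<b$ for all $a\in A,b\in B$. A 4-crown is the ordinal sum of two 2-element antichains. A retract is the image of an idempotent order-preserving self-map. A section of width three is a poset $P$ of height $h_P\ge1$ with carrier $\{c_{k,j}:k\in[0,h_P],j\in\{0,1,2\}\}$ such that: $c_{0,j}<\dots<c_{h_P,j}$ for each $j$; each $\{c_{k,0},c_{k,1},c_{k,2}\}$ is an antichain; $c_{k,i}<c_{\ell,j}\Rightarrow c_{k,i+1}<c_{\ell,j+1}$ (indices mod 3); and for no $k$ is $P(k)<P(k+1)$. It is nice if for all $x<y$: $\{z:z>x\}\not\subseteq\{z:z\ge y\}$ and $\{z:z<y\}\not\subseteq\{z:z\le x\}$. The horizon of a nice section of height $\ge2$ is the smallest $\eta\in\mathbb N$ with $P(k)<P(k+\eta)$ for all $k\in[0,h_P-\eta]$; $\mathfrak N_\eta$ is the class of nice sections of height $\ge2$ with horizon $\eta$. *)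

(* Defs.v *)
From mathcomp Require Import all_boot all_order.
Set Implicit Arguments. Unset Strict Implicit. Unset Printing Implicit Defensive.
Import Order.Theory.
Local Open Scope order_scope.

Section Sections.
Context {disp : Order.disp_t} {T : finPOrderType disp}.

Definition minset (A : {set T}) : {set T} :=
  [set x in A | [forall y in A, ~~ (y < x)]].

(* below k = P(0) U ... U P(k-1) *)
Fixpoint below (k : nat) : {set T} :=
  match k with
  | 0 => set0
  | k'.+1 => below k' :|: minset (~: below k')
  end.

Definition level (k : nat) : {set T} := minset (~: below k).

Definition set_lt (A B : {set T}) : Prop :=
  forall a b, a \in A -> b \in B -> a < b.

Definition has_height (h : nat) : Prop :=
  (exists s : seq T, size s = h.+1 /\ sorted <%O s) /\
  (forall s : seq T, sorted <%O s -> size s <= h.+1)%N.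

Definition section3 (h : nat) (c : 'I_h.+1 -> 'I_3 -> T) : Prop :=
  [/\ (1 <= h)%N, has_height h,
      bijective (fun p : 'I_h.+1 * 'I_3 => c p.1 p.2) &
    [/\ (forall (j : 'I_3) (k l : 'I_h.+1), (k < l)%N -> c k j < c l j),
      (forall (k : 'I_h.+1) (i j : 'I_3), i != j -> ~~ (c k i >=< c k j)),
      (forall (k l : 'I_h.+1) (i j : 'I_3),
          c k i < c l j -> c k (ordS i) < c l (ordS j)) &
      (forall k : nat, (k < h)%N -> ~ set_lt (level k) (level k.+1))]].

Definition nice_poset : Prop :=
  forall x y : T, x < y ->
    ~ (forall z, x < z -> y <= z) /\ ~ (forall z, z < y -> z <= x).

Definition horizon_cond (h eta : nat) : Prop :=
  forall k : nat, (k + eta <= h)%N -> set_lt (level k) (level (k + eta)).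

Definition is_horizon (h eta : nat) : Prop :=
  horizon_cond h eta /\ (forall e : nat, (e < eta)%N -> ~ horizon_cond h e).

Definition in_N (eta h : nat) (c : 'I_h.+1 -> 'I_3 -> T) : Prop :=
  [/\ section3 c, nice_poset, (2 <= h)%N & is_horizon h eta].

Definition has_4crown_retract : Prop :=
  exists r : T -> T,
    [/\ (forall x, r (r x) = r x), {homo r : x y / x <= y} &
        exists a b c d : T,
          [/\ [set r x | x in T] = [set a; b; c; d],
              a < c /\ a < d, b < c /\ b < d &
              ~~ (a >=< b) /\ ~~ (c >=< d)]].
End Sections.

(* Main.v *)
Require Import Defs.
From mathcomp Require Import all_boot all_order.
Set Implicit Arguments. Unset Strict Implicit. Unset Printing Implicit Defensive.
Import Order.Theory.

Section Helpers.
Local Open Scope order_scope.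
Context {disp : Order.disp_t} {T : finPOrderType disp}.
Variables (h : nat) (c : 'I_h.+1 -> 'I_3 -> T) (g : T -> 'I_h.+1 * 'I_3).
Hypothesis gK : forall p, g (c p.1 p.2) = p.
Hypothesis Kg : forall x, c (g x).1 (g x).2 = x.
Hypothesis cchain : forall (j : 'I_3) (k l : 'I_h.+1), (k < l)%N -> c k j < c l j.
Hypothesis canti : forall (k : 'I_h.+1) (i j : 'I_3), i != j -> ~~ (c k i >=< c k j).

Lemma gK' l i : g (c l i) = (l, i).
Proof. exact: (gK (l, i)). Qed.

Lemma cle j (k l : 'I_h.+1) : (k <= l)%N -> c k j <= c l j.
Proof.
rewrite leq_eqVlt => /orP [/eqP/val_inj -> // | /(cchain j)/ltW //].
Qed.

Lemma cnlt (k l : 'I_h.+1) i j : (k <= l)%N -> ~~ (c l i < c k j).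
Proof.
move=> kl; apply/negP => lt.
case: (eqVneq i j) => [eij|nij].
  subst; have := cle j kl; by rewrite (lt_geF lt).
have := canti k nij; rewrite (lt_comparable (le_lt_trans (cle i kl) lt)) //.
Qed.

Lemma below_row k x : (x \in below k) = ((g x).1 < k)%N.
Proof.
elim: k x => [|k IH] x; first by rewrite in_set0.
rewrite /= in_setU IH.
suff -> : (x \in Defs.minset (~: below k)) = ((g x).1 == k :> nat).
  by rewrite ltnS [in RHS]leq_eqVlt orbC.
rewrite -[x]Kg gK.
case: (g x) => l i /=.
rewrite /Defs.minset inE in_setC IH gK' /=.
case: (ltngtP l k) => [lk|kl|lk] /=.
- done.
- apply/negbTE; apply/forallPn.
  have kh : (k < h.+1)%N by apply: ltn_trans kl _.
  exists (c (Ordinal kh) i); rewrite negb_imply in_setC IH gK' /= ltnn /=.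
  by rewrite negbK; apply: cchain.
- apply/forallP => y; apply/implyP.
  rewrite -[y]Kg; case: (g y) => l' j /=; rewrite in_setC IH gK' /=.
  by rewrite -leqNgt => kl'; apply: cnlt; rewrite lk.
Qed.

Lemma level_row k (kk : 'I_h.+1) i : (c kk i \in level k) = (kk == k :> nat).
Proof.
rewrite /level /minset inE in_setC below_row gK' /=.
case: (ltngtP kk k) => [lk|kl|lk] /=.
- done.
- apply/negbTE; apply/forallPn.
  have kh : (k < h.+1)%N by apply: ltn_trans kl _.
  exists (c (Ordinal kh) i); rewrite negb_imply in_setC below_row gK' /= ltnn /=.
  by rewrite negbK; apply: cchain.
- apply/forallP => y; apply/implyP.
  rewrite -[y]Kg; case: (g y) => l' j /=; rewrite in_setC below_row gK' /=.
  by rewrite -leqNgt => kl'; apply: cnlt; rewrite lk.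
Qed.
End Helpers.

Section Main.
Local Open Scope order_scope.

Lemma main_aux (disp : Order.disp_t) (T : finPOrderType disp)
  (eta h : nat) (c : 'I_h.+1 -> 'I_3 -> T) :
  (2 <= eta)%N -> in_N eta c -> (eta < h)%N -> ~ has_4crown_retract (T := T).
Proof.
move=> eta2 [[h1 hh cbij [cchain canti crot nlev]] nice h2 [hor hmin]] etah.
move=> [r [rr rhom [a [b [u [v [im [au av] [bu bv] [nab nuv]]]]]]]].
case: cbij => g gK0 Kg0.
have gK : forall p, g (c p.1 p.2) = p := gK0.
have Kg : forall x, c (g x).1 (g x).2 = x := Kg0.
have img : forall x, [|| r x == a, r x == b, r x == u | r x == v].
  move=> x; have : r x \in [set r y | y in T] by apply: imset_f.
  by rewrite im !inE -!orbA.
have fix_im : forall y, y \in [set a; b; u; v] -> r y = y.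
  move=> y; rewrite -im => /imsetP [x _ ->]; exact: rr.
have ru : r u = u by apply: fix_im; rewrite !inE eqxx ?orbT.
have rv : r v = v by apply: fix_im; rewrite !inE eqxx ?orbT.
have rb : r b = b by apply: fix_im; rewrite !inE eqxx ?orbT.
have ra : r a = a by apply: fix_im; rewrite !inE eqxx ?orbT.
have up : forall x y, x <= y -> (r x == u) || (r x == v) -> r y = r x.
  move=> x y xy rxuv; have le := rhom _ _ xy.
  case/orP: rxuv => /eqP rx; rewrite rx in le *;
  case/or4P: (img y) => /eqP ry; rewrite ry in le * => //.
  - by rewrite (lt_geF au) in le.
  - by rewrite (lt_geF bu) in le.
  - by move: nuv; rewrite (le_comparable le).
  - by rewrite (lt_geF av) in le.
  - by rewrite (lt_geF bv) in le.
  - by move: nuv; rewrite comparable_sym (le_comparable le).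
have down : forall x y, x <= y -> (r y == a) || (r y == b) -> r x = r y.
  move=> x y xy ryab; have le := rhom _ _ xy.
  case/orP: ryab => /eqP ry; rewrite ry in le *;
  case/or4P: (img x) => /eqP rx; rewrite rx in le * => //.
  - by move: nab; rewrite comparable_sym (le_comparable le).
  - by rewrite (lt_geF au) in le.
  - by rewrite (lt_geF av) in le.
  - by move: nab; rewrite (le_comparable le).
  - by rewrite (lt_geF bu) in le.
  - by rewrite (lt_geF bv) in le.
have eh : (eta < h.+1)%N by apply: ltnW.
pose e : 'I_h.+1 := Ordinal eh.
have e1h : (eta.+1 < h.+1)%N by [].
pose e1 : 'I_h.+1 := Ordinal e1h.
have low : forall i j, c ord0 i < c e j.
  move=> i j; apply: (hor 0 (ltnW etah)).
    by rewrite (level_row gK Kg cchain canti).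
  by rewrite (level_row gK Kg cchain canti).
have F2 : forall j, (r (c e j) == u) || (r (c e j) == v).
  move=> j; case/or4P: (img (c e j)) => /eqP rj; rewrite ?rj ?eqxx ?orbT //; exfalso.
  - have r0 : forall i, r (c ord0 i) = a.
      move=> i; rewrite -rj; apply: down; [exact: ltW (low i j) | by rewrite rj eqxx].
    have H0 : c ord0 (g b).2 <= c (g b).1 (g b).2 by apply: (cle cchain).
    have := rhom _ _ H0; rewrite Kg r0 rb => ab.
    by move: nab; rewrite (le_comparable ab).
  - have r0 : forall i, r (c ord0 i) = b.
      move=> i; rewrite -rj; apply: down; [exact: ltW (low i j) | by rewrite rj eqxx ?orbT].
    have H0 : c ord0 (g a).2 <= c (g a).1 (g a).2 by apply: (cle cchain).
    have := rhom _ _ H0; rewrite Kg r0 ra => ab.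
    by move: nab; rewrite comparable_sym (le_comparable ab).
have elt : forall (l : 'I_h.+1) j, c e ord0 < c l j -> (e < l)%N.
  move=> l j lt; rewrite ltnNge; apply/negP => le.
  by move: lt; apply/negP; apply: (cnlt cchain canti).
have F3 : forall (l : 'I_h.+1) (j : 'I_3), j != ord0 -> ~ (c e ord0 < c l j).
  move=> l j j0 lt.
  have el := elt _ _ lt.
  have S : forall i, r (c l i) = r (c e i).
    move=> i; apply: up; [exact: ltW (cchain i e l el) | exact: F2].
  pose o1 : 'I_3 := ordS ord0.
  pose o2 : 'I_3 := ordS o1.
  have o3 : ordS o2 = ord0 by apply: val_inj.
  have lt1 := crot _ _ _ _ lt.
  rewrite -/o1 in lt1.
  have Rl : forall i j', c e i < c l j' -> r (c e j') = r (c e i).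
    move=> i j' H; rewrite -S; apply: up; [exact: ltW | exact: F2].
  have Fv : forall x y : 'I_3, (x == y :> nat) -> r (c e x) = r (c e y).
    by move=> x y /eqP/val_inj ->.
  have R : forall i, r (c e i) = r (c e ord0).
    have [jo1|jo2] : j = o1 \/ j = o2.
      case: j j0 {lt lt1} => [[|[|[|m]]] jp] //= _; [left|right]; exact: val_inj.
    - subst j; rewrite -/o2 in lt1.
      have lt2 := crot _ _ _ _ lt1; rewrite o3 -/o2 in lt2.
      have E1 := Rl _ _ lt; have E2 := Rl _ _ lt1.
      move=> i; case: i => [[|[|[|m]]] ip].
      + by apply: Fv.
      + by rewrite (Fv _ o1) // E1.
      + by rewrite (Fv _ o2) // E2 E1.
      + by [].
    - subst j; rewrite o3 in lt1.
      have lt2 := crot _ _ _ _ lt1; rewrite -/o1 -/o2 in lt2.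
      have E1 := Rl _ _ lt; have E2 := Rl _ _ lt2.
      move=> i; case: i => [[|[|[|m]]] ip].
      + by apply: Fv.
      + by rewrite (Fv _ o1) // E2 (Rl _ _ lt1).
      + by rewrite (Fv _ o2) // E1.
      + by [].
  have top : forall w, r w = w -> (r w == u) || (r w == v) -> w = r (c e ord0).
    move=> w rw wuv.
    have H1 : w <= c ord_max (g w).2.
      rewrite -{1}[w]Kg; apply: (cle cchain); exact: leq_ord.
    have H2 : c e (g w).2 <= c ord_max (g w).2.
      apply: (cle cchain); exact: leq_ord.
    rewrite -(R (g w).2) -(up _ _ H2 (F2 _)) (up _ _ H1 wuv) //.
  have := top u ru; rewrite ru eqxx => /(_ isT) Eu.
  have := top v rv; rewrite rv eqxx orbT => /(_ isT) Ev.
  by move: nuv; rewrite Eu Ev comparablexx.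
have := nice (c e ord0) (c e1 ord0) (cchain ord0 e e1 (ltnSn _)).
case => H _; apply: H => z lt.
rewrite -[z]Kg in lt *; move: lt; case: (g z) => l j /= lt.
case: (eqVneq j ord0) => [ej | j0]; last by case: (F3 l j j0 lt).
subst j; apply: (cle cchain); exact: elt _ _ lt.
Qed.
End Main.

Theorem lemma3p7 (disp : Order.disp_t) (T : finPOrderType disp)
  (eta h : nat) (c : 'I_h.+1 -> 'I_3 -> T) :
  (2 <= eta)%N -> in_N eta c -> (eta < h)%N -> ~ has_4crown_retract (T := T).
Proof. exact: main_aux. Qed.
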